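(* Let $n>f\ge0$, $b=\frac{f}{n-f}$, let $F_2$ be a $(b,\rho)$-robust summation and $F_1$ an $(f,\nu)$-robust aggregation rule. For inputs $x_1,\dots,x_n\in\mathbb{R}^d$ define, for each $i\in[n]$, $$y_i=x_i-F_2\Big(\big(\tfrac{1}{n-f},\,x_i-x_j\big)_{j\in[n]}\Big),$$ and define the aggregation rule $\tilde F(x_1,\dots,x_n):=F_1(y_1,\dots,y_n)$. Then $\tilde F$ is an $(f,\tilde\nu)$-robust aggregation rule with $$\tilde\nu=\delta(1+\nu),\qquad \delta:=\frac{2\rho f}{n-f}.$$
   Context: $(f,\nu)$-robust aggregation rule: a map $F:\mathbb{R}^{d\times n}\to\mathbb{R}^d$ such that for all $x_1,\dots,x_n\in\mathbb{R}^d$ and every $S\subset[n]$ with $|S|=n-f$, $\|F(x_1,\dots,x_n)-\bar x_S\|^2\le \nu\frac{1}{|S|}\sum_{i\in S}\|x_i-\bar x_S\|^2$, where $\bar x_S=\frac{1}{|S|}\sum_{i\in S}x_i$. $(b,\rho)$-robust summation: a map $F:(\mathbb{R}_+\times\mathbb{R}^d)^n\to\mathbb{R}^d$ such that for all vectors $z_1,\dots,z_n\in\mathbb{R}^d$, all weights $\omega_1,\dots,\omega_n\ge0$ and every $S\subset[n]$ with $\sum_{i\in[n]\setminus S}\omega_i\le b$, one has $\big\|F((\omega_i,z_i)_{i\in[n]})-\sum_{i\in S}\omega_iz_i\big\|^2\le\rho b\sum_{i\in S}\omega_i\|z_i\|^2$. *)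

(* Defs.v *)
From mathcomp Require Import all_boot all_order all_algebra.
Set Implicit Arguments. Unset Strict Implicit. Unset Printing Implicit Defensive.
Import Order.TTheory GRing.Theory Num.Theory.
Local Open Scope ring_scope.

Definition sqnorm (R : realFieldType) (d : nat) (v : 'rV[R]_d) : R :=
  \sum_(k < d) (v 0 k) ^+ 2.

Definition avg (R : realFieldType) (d n : nat) (x : 'I_n -> 'rV[R]_d)
  (S : {set 'I_n}) : 'rV[R]_d :=
  (#|S|%:R)^-1 *: \sum_(i in S) x i.

Definition robust_aggregation (R : realFieldType) (d n f : nat) (nu : R)
  (F : ('I_n -> 'rV[R]_d) -> 'rV[R]_d) : Prop :=
  forall (x : 'I_n -> 'rV[R]_d) (S : {set 'I_n}), #|S| = (n - f)%N ->
    sqnorm (F x - avg x S)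
      <= nu * ((#|S|%:R)^-1 * \sum_(i in S) sqnorm (x i - avg x S)).

(* (b,rho)-robust summation F : (R_+ x R^d)^n -> R^d, represented as a
   function of the weight vector w and the vector family z; the property is
   only required for nonnegative weights. *)
Definition robust_summation (R : realFieldType) (d n : nat) (b rho : R)
  (F : ('I_n -> R) -> ('I_n -> 'rV[R]_d) -> 'rV[R]_d) : Prop :=
  forall (w : 'I_n -> R) (z : 'I_n -> 'rV[R]_d) (S : {set 'I_n}),
    (forall i, 0 <= w i) ->
    \sum_(i in ~: S) w i <= b ->
    sqnorm (F w z - \sum_(i in S) w i *: z i)
      <= rho * b * \sum_(i in S) w i * sqnorm (z i).

Definition composed_rule (R : realFieldType) (d n f : nat)
  (F1 : ('I_n -> 'rV[R]_d) -> 'rV[R]_d)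
  (F2 : ('I_n -> R) -> ('I_n -> 'rV[R]_d) -> 'rV[R]_d)
  (x : 'I_n -> 'rV[R]_d) : 'rV[R]_d :=
  F1 (fun i => x i - F2 (fun _ => ((n - f)%:R)^-1) (fun j => x i - x j)).

(* Main.v *)
Require Import Defs.
From mathcomp Require Import all_boot all_order all_algebra.
From mathcomp Require Import ring lra.
Import Order.TTheory GRing.Theory Num.Theory.
Local Open Scope ring_scope.

Lemma scal2 (R : realFieldType) (nu c P D Q EE Y : R) :
  0 <= P -> 0 <= Q -> 0 <= Y -> P <= nu * (EE - Q) ->
  0 <= P + 2 * (nu * D) + nu ^+ 2 * Q -> (P = 0 -> D = 0) ->
  0 <= EE - Q -> EE <= 2 * c * Y -> 0 <= nu * Y ->
  P - 2 * D + Q <= 2 * c * (1 + nu) * Y.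
Proof.
move=> hP hQ hY hPn h6 h7 hW hE hnY.
case: (ltgtP nu 0) => hnu.
- have Y0 : Y = 0 by apply/eqP; rewrite eq_le hY andbT; nra.
  have Q0 : Q = 0 by apply/eqP; rewrite eq_le hQ andbT; nra.
  have P0 : P = 0 by apply/eqP; rewrite eq_le hP andbT; nra.
  rewrite Y0 Q0 P0 (h7 P0); lra.
- have h1 : nu * (P - 2 * D + Q) <= nu * (2 * c * (1 + nu) * Y).
    have a : nu * (P - 2 * D + Q) <= (1 + nu) * (P + nu * Q) by nra.
    have b : (1 + nu) * (P + nu * Q) <= (1 + nu) * (nu * EE).
      apply: ler_wpM2l; nra.
    have b2 : (1 + nu) * (nu * EE) <= (1 + nu) * (nu * (2 * c * Y)).
      apply: ler_wpM2l; first lra. apply: ler_wpM2l; lra.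
    nra.
  by rewrite ler_pM2l in h1.
- have P0 : P = 0 by apply/eqP; rewrite eq_le hP andbT; rewrite hnu in hPn; lra.
  rewrite P0 (h7 P0) hnu; lra.
Qed.

Section Aux.
Variables (R : realFieldType) (d : nat).
Implicit Types (u v w : 'rV[R]_d).

Definition dot u v : R := \sum_(k < d) u 0 k * v 0 k.

Lemma sqnormE u : sqnorm u = dot u u.
Proof. by apply: eq_bigr => k _; rewrite expr2. Qed.

Lemma sqnorm_ge0 u : 0 <= sqnorm u.
Proof. by apply: sumr_ge0 => k _; rewrite sqr_ge0. Qed.

Lemma dotC u v : dot u v = dot v u.
Proof. by apply: eq_bigr => k _; rewrite mulrC. Qed.

Lemma sqnormB u v : sqnorm (u - v) = sqnorm u - 2 * dot u v + sqnorm v.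
Proof.
rewrite /sqnorm /dot (eq_bigr (fun k => u 0 k ^+2 - 2 * (u 0 k * v 0 k) + v 0 k ^+ 2)); last first.
  by move=> k _; rewrite !mxE; ring.
by rewrite big_split /= sumrB mulr_sumr.
Qed.

Lemma sqnormD u v : sqnorm (u + v) = sqnorm u + 2 * dot u v + sqnorm v.
Proof.
rewrite /sqnorm /dot (eq_bigr (fun k => u 0 k ^+2 + 2 * (u 0 k * v 0 k) + v 0 k ^+ 2)); last first.
  by move=> k _; rewrite !mxE; ring.
by rewrite !big_split /= mulr_sumr.
Qed.

Lemma dotZl c u v : dot (c *: u) v = c * dot u v.
Proof. by rewrite /dot mulr_sumr; apply: eq_bigr => k _; rewrite !mxE mulrA. Qed.

Lemma dotZr c u v : dot u (c *: v) = c * dot u v.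
Proof. by rewrite dotC dotZl dotC. Qed.

Lemma dot0l v : dot 0 v = 0.
Proof. by rewrite /dot big1 // => k _; rewrite mxE mul0r. Qed.

Lemma dot0r v : dot v 0 = 0.
Proof. by rewrite dotC dot0l. Qed.

Lemma dot_sumL n (S : {set 'I_n}) (a : 'I_n -> 'rV[R]_d) v :
  dot (\sum_(i in S) a i) v = \sum_(i in S) dot (a i) v.
Proof.
rewrite /dot (eq_bigr (fun k => \sum_(i in S) a i 0 k * v 0 k)).
  by rewrite exchange_big.
by move=> k _; rewrite summxE mulr_suml.
Qed.

Lemma dot_sumR n (S : {set 'I_n}) (a : 'I_n -> 'rV[R]_d) v :
  dot v (\sum_(i in S) a i) = \sum_(i in S) dot v (a i).
Proof. by rewrite dotC dot_sumL; apply: eq_bigr => i _; rewrite dotC. Qed.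

Lemma sqnorm_eq0 u : sqnorm u = 0 -> u = 0.
Proof.
move=> /eqP; rewrite psumr_eq0; last by move=> k _; rewrite sqr_ge0.
move=> /allP H; apply/rowP => k; rewrite mxE.
have := H k (mem_index_enum k); rewrite /= sqrf_eq0 => /eqP.
done.
Qed.

Lemma sqnormN u : sqnorm (- u) = sqnorm u.
Proof. by apply: eq_bigr => k _; rewrite mxE sqrrN. Qed.

Lemma sqnormZ c u : sqnorm (c *: u) = c ^+ 2 * sqnorm u.
Proof. by rewrite !sqnormE dotZl dotZr mulrA expr2. Qed.

Lemma sum_avg n (S : {set 'I_n}) (a : 'I_n -> 'rV[R]_d) :
  (#|S|%:R : R) != 0 -> \sum_(i in S) a i = #|S|%:R *: avg a S.
Proof. by move=> m0; rewrite /avg scalerA mulfV // scale1r. Qed.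

Lemma var_id n (S : {set 'I_n}) (a : 'I_n -> 'rV[R]_d) :
  (#|S|%:R : R) != 0 ->
  \sum_(i in S) sqnorm (a i - avg a S)
    = \sum_(i in S) sqnorm (a i) - #|S|%:R * sqnorm (avg a S).
Proof.
move=> m0.
rewrite (eq_bigr (fun i => sqnorm (a i) - 2 * dot (a i) (avg a S) + sqnorm (avg a S)));
  last by move=> i _; rewrite sqnormB.
rewrite big_split /= sumrB -mulr_sumr -dot_sumL sum_avg // dotZl sumr_const.
rewrite -mulr_natr -sqnormE; ring.
Qed.

Lemma dbl_id n (S : {set 'I_n}) (a : 'I_n -> 'rV[R]_d) :
  (#|S|%:R : R) != 0 ->
  \sum_(i in S) \sum_(j in S) sqnorm (a i - a j)
    = 2 * #|S|%:R * \sum_(i in S) sqnorm (a i - avg a S).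
Proof.
move=> m0.
set c := avg a S; set b := fun i => a i - c.
have sb : \sum_(i in S) b i = 0.
  by rewrite /b sumrB sum_avg // sumr_const -scaler_nat subrr.
have E : forall i j, a i - a j = b i - b j.
  by move=> i j; rewrite /b opprB addrA subrK.
rewrite (eq_bigr (fun i => #|S|%:R * sqnorm (b i) + \sum_(j in S) sqnorm (b j))).
  rewrite big_split /= sumr_const -mulr_natr -mulr_sumr; ring.
move=> i _.
rewrite (eq_bigr (fun j => sqnorm (b i) - 2 * dot (b i) (b j) + sqnorm (b j)));
  last by move=> j _; rewrite E sqnormB.
rewrite big_split /= sumrB sumr_const -mulr_sumr -(@dot_sumR n S b) sb dot0r -mulr_natr; ring.
Qed.

End Aux.

Theorem mainTheorem4 (R : realFieldType) (d n f : nat) (nu rho : R)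
  (F1 : ('I_n -> 'rV[R]_d) -> 'rV[R]_d)
  (F2 : ('I_n -> R) -> ('I_n -> 'rV[R]_d) -> 'rV[R]_d) :
  (f < n)%N ->
  robust_summation ((f%:R) / ((n - f)%:R)) rho F2 ->
  robust_aggregation f nu F1 ->
  robust_aggregation f
    (((2 * rho * f%:R) / ((n - f)%:R)) * (1 + nu))
    (composed_rule f F1 F2).
Proof.
move=> hfn h2 h1 x S hS.
have mpos : (0 : R) < #|S|%:R by rewrite hS ltr0n subn_gt0.
have m0 : (#|S|%:R : R) != 0 by rewrite gt_eqF.
set m : R := #|S|%:R.
set xb := avg x S.
set w := fun _ : 'I_n => ((n - f)%:R : R)^-1.
set y := fun i => x i - F2 w (fun j => x i - x j).
rewrite /composed_rule -/w -/y.
set e := fun i => xb - y i.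
set c := rho * (f%:R / (n - f)%:R).
have wm : ((n - f)%:R : R)^-1 = m^-1 by rewrite /m hS.
have he : forall i, i \in S -> sqnorm (e i) <= c * \sum_(j in S) w j * sqnorm (x i - x j).
  move=> i iS.
  have := h2 w (fun j => x i - x j) S.
  have -> : F2 w (fun j => x i - x j) - \sum_(j in S) w j *: (x i - x j) = e i.
    apply/rowP => k; rewrite /e /y /xb /avg !mxE summxE summxE.
    under eq_bigr do rewrite !mxE.
    rewrite /w wm -mulr_sumr sumrB sumr_const -(mulr_natr (x i 0 k)) -/m.
    rewrite mulrBr (mulrC (x i 0 k)) mulrA mulVf // mul1r. ring.
  apply.
    by move=> j; rewrite /w invr_ge0 ler0n.
  have Hc : (#|~: S| = f)%N.
    have := cardsC S; rewrite card_ord hS => H.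
    by apply/eqP; rewrite -(eqn_add2l (n - f)) H subnK // ltnW.
  by rewrite sumr_const /w Hc -(mulr_natl ((n - f)%:R^-1) f).
set Vs := \sum_(i in S) sqnorm (x i - xb).
have hE : \sum_(i in S) sqnorm (e i) <= 2 * c * Vs.
  apply: (le_trans (ler_sum _ he)).
  rewrite -mulr_sumr.
  under eq_bigr => i _ do rewrite /w wm -mulr_sumr.
  rewrite -mulr_sumr dbl_id // -/xb -/Vs.
  rewrite le_eqVlt; apply/orP; left; apply/eqP; field.
  by [].
have Hay : avg y S = xb - avg e S.
  have xbk : forall k, xb 0 k = m^-1 * \sum_(i in S) x i 0 k.
    by move=> k; rewrite /xb /avg !mxE summxE.
  apply/rowP => k; rewrite /avg /e !mxE !summxE.
  under [X in _ = _ - _ * X]eq_bigr do rewrite !mxE.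
  rewrite big_split /= sumrN sumr_const -[X in _ * (X - _)]mulr_natr summxE.
  have -> : \sum_(i in S) (x i 0 k - F2 w (fun j => x i - x j) 0 k) = \sum_(i in S) y i 0 k by apply: eq_bigr => i _; rewrite /y !mxE.
  field.
  by [].
set eb := avg e S.
have he2 : \sum_(i in S) sqnorm (y i - avg y S) = \sum_(i in S) sqnorm (e i - eb).
  apply: eq_bigr => i _; rewrite -sqnormN; congr sqnorm.
  by apply/rowP => k; rewrite Hay /e !mxE; ring.
have hP := h1 y S hS.
rewrite he2 var_id // -/eb in hP.
set u := F1 y - avg y S.
have -> : F1 y - xb = u - eb.
  by apply/rowP => k; rewrite /u Hay !mxE; ring.
have hx := h1 x S hS; rewrite -/xb -/Vs -/m in hx.
have hx' : 0 <= nu * (m^-1 * Vs) := le_trans (sqnorm_ge0 _ _ _) hx.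
have h6 := sqnorm_ge0 _ _ (u + nu *: eb).
rewrite sqnormD dotZr sqnormZ in h6.
have h7 : sqnorm u = 0 -> dot _ _ u eb = 0.
  by move/sqnorm_eq0 => ->; rewrite dot0l.
have hVe : 0 <= \sum_(i in S) sqnorm (e i) - m * sqnorm eb.
  by rewrite -var_id // sumr_ge0 // => i _; exact: sqnorm_ge0.
rewrite sqnormB -hS -/m.
rewrite -/m -/u in hP.
rewrite /c -hS -/m in hE.
have -> : 2 * rho * f%:R / m * (1 + nu) * (m^-1 * Vs)
    = 2 * (rho * (f%:R / m)) * (1 + nu) * (m^-1 * Vs) by ring.
have km : 0 <= m^-1 by rewrite invr_ge0 ltW.
have eq1 : m^-1 * (\sum_(i in S) sqnorm (e i) - m * sqnorm eb)
    = m^-1 * \sum_(i in S) sqnorm (e i) - sqnorm eb by field.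
apply: (@scal2 _ _ _ _ _ _ (m^-1 * \sum_(i in S) sqnorm (e i))).
- exact: sqnorm_ge0.
- exact: sqnorm_ge0.
- by apply: mulr_ge0 => //; apply: sumr_ge0 => i _; exact: sqnorm_ge0.
- by rewrite -eq1.
- exact: h6.
- exact: h7.
- by rewrite -eq1; apply: mulr_ge0.
- have := ler_wpM2l km hE.
  by have -> : m^-1 * (2 * (rho * (f%:R / m)) * Vs) = 2 * (rho * (f%:R / m)) * (m^-1 * Vs) by ring.
- exact: hx'.
Qed.
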